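(* Let $\alpha,\beta,\gamma\in\mathbb{C}$ and $k\in\mathbb{N}$, and consider the difference equation $$z_{n+1}=\frac{\alpha+\beta z_{n-k}}{\gamma-z_n},\qquad n=0,1,2,\ldots,$$ with complex initial conditions $z_{-k},\dots,z_{-1},z_0$. Let $s=\sqrt{(\beta-\gamma)^2-4\alpha}=\sqrt{-4\alpha+\beta^2-2\beta\gamma+\gamma^2}$ and let $\bar z_2=\frac{1}{2}\left(s-\beta+\gamma\right)$, which is a fixed point of the equation. If $$\left|\frac{2\beta}{-s+\beta+\gamma}\right|+\left|\frac{\gamma\left(s-\beta+\gamma\right)-2\alpha}{2(\alpha+\beta\gamma)}\right|<1,$$ then $\bar z_2$ is locally asymptotically stable.
   Context: Here $\sqrt{\cdot}$ denotes a fixed complex square root, used consistently in all occurrences. A fixed point $\bar z$ of $z_{n+1}=f(z_n,\dots,z_{n-k})$ is a point with $\bar z=f(\bar z,\dots,\bar z)$. It is locally asymptotically stable if for every $\epsilon>0$ there is $\delta>0$ such that $|z_{-k}-\bar z|+\dots+|z_0-\bar z|<\delta$ implies $|z_n-\bar z|<\epsilon$ for all $n\ge -k$ (and solutions converge to $\bar z$), as determined via the linearization of the equation at $\bar z$. *)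

(* Defs.v *)
From HB Require Import structures.
From mathcomp Require Import all_boot all_order all_algebra.
From mathcomp Require Import complex.
From mathcomp Require Import reals.
Set Implicit Arguments. Unset Strict Implicit. Unset Printing Implicit Defensive.
Import Order.TTheory GRing.Theory Num.Theory.
Local Open Scope ring_scope.
Local Open Scope complex_scope.

(* A solution of z_{n+1} = (alpha + beta z_{n-k}) / (gamma - z_n), reindexed:
   x i = z_{i-k}, so x 0, ..., x k are the initial conditions z_{-k},...,z_0,
   and the recurrence reads x (n + k + 1) = (alpha + beta x n)/(gamma - x (n + k)). *)
Definition is_solution (R : realType) (alpha beta gamma : R[i]) (k : nat)
  (x : nat -> R[i]) : Prop :=
  forall n : nat, x (n + k.+1)%N = (alpha + beta * x n) / (gamma - x (n + k)%N).

Definition is_fixed_point (R : realType) (alpha beta gamma : R[i]) (zb : R[i]) : Prop :=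
  zb = (alpha + beta * zb) / (gamma - zb).

Definition loc_asympt_stable (R : realType) (alpha beta gamma : R[i]) (k : nat)
  (zb : R[i]) : Prop :=
  (forall eps : R[i], 0 < eps -> exists2 delta : R[i], 0 < delta &
     forall x, is_solution alpha beta gamma k x ->
       \sum_(i < k.+1) `|x i - zb| < delta -> forall n, `|x n - zb| < eps) /\
  (exists2 delta0 : R[i], 0 < delta0 &
     forall x, is_solution alpha beta gamma k x ->
       \sum_(i < k.+1) `|x i - zb| < delta0 ->
       forall e : R[i], 0 < e -> exists N : nat, forall n, (N <= n)%N -> `|x n - zb| < e).

(* Main.v *)
Require Import Defs.
From HB Require Import structures.
From mathcomp Require Import all_boot all_order all_algebra.
From mathcomp Require Import complex.
From mathcomp Require Import reals.
From mathcomp Require Import ring lra zify.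
Import Order.TTheory GRing.Theory Num.Theory.
Local Open Scope ring_scope.
Local Open Scope complex_scope.

Section NR.
Variable R : rcfType.
Definition nr (z : R[i]) : R := complex.Re `|z|.
Lemma nrE z : `|z| = (nr z)%:C.
Proof. by rewrite /nr RRe_real // normr_real. Qed.
Lemma nr_ge0 z : 0 <= nr z.
Proof. by rewrite -ler0c -nrE. Qed.
Lemma nrM x y : nr (x * y) = nr x * nr y.
Proof. by apply: complexI; rewrite rmorphM /= -!nrE normrM. Qed.
Lemma nrV x : nr (x^-1) = (nr x)^-1.
Proof. by apply: complexI; rewrite fmorphV /= -!nrE normfV. Qed.
Lemma nrD x y : nr (x + y) <= nr x + nr y.
Proof. by rewrite -lecR rmorphD /= -!nrE ler_normD. Qed.
Lemma nr_gt0 x : x != 0 -> 0 < nr x.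
Proof. by move=> h; rewrite -ltcR -nrE normr_gt0. Qed.
End NR.

Lemma decay (R : realType) (k : nat) (a : nat -> R) (nb nz nD rho q M : R) :
 0 <= nb -> 0 <= nz -> 0 < rho -> rho < nD -> 0 <= q ->
 q * (nD - rho) = nb + nz + rho -> q <= 1 ->
 (forall n, 0 <= a n) ->
 (forall m, a (m + k)%N < nD ->
     a (m + k.+1)%N * (nD - a (m + k)%N) <= nb * a m + nz * a (m + k)%N) ->
 0 <= M -> M <= rho -> (forall i, (i <= k)%N -> a i <= M) ->
 forall n, a n <= M * q ^+ (n %/ k.+1).
Proof.
move=> hb hz hr hrD hq qdef hq1 ha hstep hM hMr hi n.
elim/ltn_ind: n => n IH.
case: (leqP n k) => hn.
  by rewrite divn_small // expr0 mulr1; apply: hi.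
rewrite -(subnK hn); set m := (n - k.+1)%N.
have -> : (m + k.+1 = m + 1 * k.+1)%N by rewrite mul1n.
rewrite divnDMl // exprD expr1 mul1n.
have hm : (m < n)%N by rewrite /m; lia.
have hmk : (m + k < n)%N by rewrite /m; lia.
set T := M * q ^+ (m %/ k.+1).
have hT0 : 0 <= T by rewrite /T mulr_ge0 // exprn_ge0.
have hTr : T <= rho.
  apply: le_trans hMr; rewrite /T -[leRHS]mulr1 ler_wpM2l //.
  exact: exprn_ile1.
have h1 : a m <= T := IH m hm.
have h2 : a (m + k)%N <= T.
  apply: le_trans (IH _ hmk) _; rewrite /T ler_wpM2l //.
  apply: ler_wiXn2l => //; apply: leq_div2r; exact: leq_addr.
have hpos : 0 < nD - a (m + k)%N by lra.
rewrite -(ler_pM2r hpos).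
apply: le_trans (hstep m ltac:(lra)) _.
have h3 : nb * a m <= nb * T by rewrite ler_wpM2l.
have h4 : nz * a (m + k)%N <= nz * T by rewrite ler_wpM2l.
have h5 : 0 <= q * T * (rho - a (m + k)%N).
  by apply: mulr_ge0; [exact: mulr_ge0 | rewrite subr_ge0; lra].
have h6 : q * T * (nD - rho) = (nb + nz + rho) * T by rewrite mulrAC qdef.
have h7 : 0 <= rho * T by rewrite mulr_ge0 // ltW.
rewrite mulrA -/T (mulrC T q).
lra.
Qed.

Lemma geo_small (R : realType) (q M e : R) :
  0 <= q -> q < 1 -> 0 <= M -> 0 < e -> exists j : nat, M * q ^+ j < e.
Proof.
move=> hq hq1 hM he.
set h := 1 - q.
have hh : 0 < h by rewrite /h; lra.
have bern : forall j : nat, q ^+ j * (1 + j%:R * h) <= 1.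
  elim=> [|j IH]; first by rewrite expr0 mul0r addr0 mulr1.
  have hqj : q ^+ j.+1 <= 1 by exact: exprn_ile1 (ltW hq1).
  have e1 : q ^+ j.+1 * (1 + j.+1%:R * h) = q * (q ^+ j * (1 + j%:R * h)) + q ^+ j.+1 * h.
    by rewrite exprS -natr1; ring.
  rewrite e1.
  have : q * (q ^+ j * (1 + j%:R * h)) <= q * 1 by rewrite ler_wpM2l.
  have : q ^+ j.+1 * h <= 1 * h by rewrite ler_wpM2r // ltW.
  rewrite /h; lra.
have hx : 0 <= M / (e * h) by rewrite divr_ge0 // mulr_ge0 // ltW.
exists (Num.Def.archi_bound (M / (e * h))).
set j := Num.Def.archi_bound _.
have hj := archi_boundP hx; rewrite -/j in hj.
have hpos : 0 < 1 + j%:R * h by rewrite ltr_pwDl // mulr_ge0 // ltW.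
rewrite -(ltr_pM2r hpos).
have hjj : M < e * (j%:R * h).
  by rewrite ltr_pdivrMr ?mulr_gt0 // in hj; rewrite mulrC -mulrA (mulrC h).
have := bern j.
have hqj : 0 <= q ^+ j by exact: exprn_ge0.
move=> hb.
have : M * (q ^+ j * (1 + j%:R * h)) <= M * 1 by rewrite ler_wpM2l.
rewrite mulrA mulr1 => hb2.
have -> : e * (1 + j%:R * h) = e + e * (j%:R * h) by ring.
lra.
Qed.

Theorem theorem2p2 (R : realType) (alpha beta gamma s : R[i]) (k : nat) :
  s ^+ 2 = - 4%:R * alpha + beta ^+ 2 - 2%:R * beta * gamma + gamma ^+ 2 ->
  - s + beta + gamma != 0 ->
  alpha + beta * gamma != 0 ->
  `| 2%:R * beta / (- s + beta + gamma) |
    + `| (gamma * (s - beta + gamma) - 2%:R * alpha) / (2%:R * (alpha + beta * gamma)) | < 1 ->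
  is_fixed_point alpha beta gamma ((s - beta + gamma) / 2%:R) /\
  loc_asympt_stable alpha beta gamma k ((s - beta + gamma) / 2%:R).
Proof.
move=> hs hD hab hlt.
have h2 : (2%:R : R[i]) != 0 by rewrite pnatr_eq0.
have h4 : (4%:R : R[i]) != 0 by rewrite pnatr_eq0.
pose z := (s - beta + gamma) / 2%:R.
have hs' : s = 2%:R * z + beta - gamma by rewrite /z; field.
rewrite -/z; clearbody z; subst s.
have hF : z ^+ 2 + (beta - gamma) * z + alpha = 0.
  have : 4%:R * (z ^+ 2 + (beta - gamma) * z + alpha) = 0.
    have -> : 4%:R * (z ^+ 2 + (beta - gamma) * z + alpha) =
      (2%:R * z + beta - gamma) ^+ 2 - (- 4%:R * alpha + beta ^+ 2 - 2%:R * beta * gamma + gamma ^+ 2) by ring.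
    by rewrite hs subrr.
  by move/eqP; rewrite mulf_eq0 (negbTE h4) /= => /eqP.
have hDz : gamma - z != 0.
  apply: contra hD => /eqP hg.
  have -> : - (2%:R * z + beta - gamma) + beta + gamma = 2%:R * (gamma - z) by ring.
  by rewrite hg mulr0.
have eX1 : 2%:R * beta / (- (2%:R * z + beta - gamma) + beta + gamma) = beta / (gamma - z).
  have -> : - (2%:R * z + beta - gamma) + beta + gamma = 2%:R * (gamma - z) by ring.
  by field; rewrite ?hDz ?h2 //. 
have eX2 : (gamma * (2%:R * z + beta - gamma - beta + gamma) - 2%:R * alpha) /
      (2%:R * (alpha + beta * gamma)) = z / (gamma - z).
  apply/eqP; rewrite eqr_div ?mulf_neq0 //; apply/eqP.
  apply/eqP; rewrite -subr_eq0.
  have -> : (gamma * (2%:R * z + beta - gamma - beta + gamma) - 2%:R * alpha) * (gamma - z) -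
     z * (2%:R * (alpha + beta * gamma)) = - (2%:R * gamma) * (z ^+ 2 + (beta - gamma) * z + alpha) by ring.
  by rewrite hF mulr0.
rewrite eX1 eX2 !normf_div !nrE -!fmorph_div -rmorphD ltcE /= in hlt.
set nb := nr R beta in hlt; set nz := nr R z in hlt; set nD := nr R (gamma - z) in hlt.
have hnD : 0 < nD by exact: nr_gt0.
have hnb : 0 <= nb by exact: nr_ge0.
have hnz : 0 <= nz by exact: nr_ge0.
have hlt' : nb + nz < nD.
  move: hlt => /= hlt; rewrite -mulrDl ltr_pdivrMr // mul1r in hlt; by case/andP: hlt.
have key : forall x, is_solution alpha beta gamma k x -> forall m,
    nr R (x (m + k)%N - z) < nD ->
    nr R (x (m + k.+1)%N - z) * (nD - nr R (x (m + k)%N - z)) <=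
    nb * nr R (x m - z) + nz * nr R (x (m + k)%N - z).
  move=> x hx m hlt2.
  set y := x (m + k)%N in hlt2 *.
  have hY : gamma - y != 0.
    apply/eqP => hy; move: hlt2; rewrite -(subr0_eq hy) -/nD ltxx //.
  have he : x (m + k.+1)%N - z = (beta * (x m - z) + z * (y - z)) / (gamma - y).
    rewrite hx -/y -[z in LHS](mulfK hY) -mulrBl; congr (_ / _).
    apply/eqP; rewrite -subr_eq0.
    have -> : alpha + beta * x m - z * (gamma - y) - (beta * (x m - z) + z * (y - z)) =
       z ^+ 2 + (beta - gamma) * z + alpha by ring.
    by rewrite hF.
  have hNY : 0 < nr R (gamma - y) by exact: nr_gt0.
  have hDl : nD <= nr R (gamma - y) + nr R (y - z).
    have := nrD R (gamma - y) (y - z); rewrite -/nD.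
    by have -> : gamma - y + (y - z) = gamma - z by ring.
  have hnum : nr R (beta * (x m - z) + z * (y - z)) <= nb * nr R (x m - z) + nz * nr R (y - z).
    by have := nrD R (beta * (x m - z)) (z * (y - z)); rewrite !nrM.
  rewrite he nrM nrV.
  apply: le_trans hnum.
  rewrite -[leRHS](divfK (lt0r_neq0 hNY)) (mulrC (_ / _) (nr R (gamma - y))).
  rewrite (mulrC (_ / _)); apply: ler_wpM2r; first by rewrite divr_ge0 // nr_ge0.
  lra.
set rho := (nD - nb - nz) / 3%:R.
have hrho : 0 < rho by rewrite /rho divr_gt0 //; lra.
have hrhoD : rho < nD by rewrite /rho ltr_pdivrMr //; lra.
have hDr : 0 < nD - rho by lra.
set q := (nb + nz + rho) / (nD - rho).
have qdef : q * (nD - rho) = nb + nz + rho by rewrite /q divfK // lt0r_neq0.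
have hq0 : 0 <= q by rewrite /q divr_ge0 //; lra.
have hq1 : q < 1 by rewrite /q ltr_pdivrMr // mul1r /rho; lra.
have sumb : forall (x : nat -> R[i]) (d : R), \sum_(i < k.+1) `|x i - z| < d%:C ->
    forall i, (i <= k)%N -> nr R (x i - z) <= d.
  move=> x d hsum i hi.
  have : `|x i - z| < d%:C.
    apply: le_lt_trans hsum.
    rewrite (bigD1 (Ordinal (hi : (i < k.+1)%N))) //= lerDl.
    by apply: sumr_ge0 => j _; exact: normr_ge0.
  by rewrite nrE ltcR => /ltW.
have dec : forall x, is_solution alpha beta gamma k x -> forall M, 0 <= M -> M <= rho ->
    (forall i, (i <= k)%N -> nr R (x i - z) <= M) ->
    forall n, nr R (x n - z) <= M * q ^+ (n %/ k.+1).
  move=> x hx M hM hMr hi.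
  apply: (@decay R k (fun n => nr R (x n - z)) nb nz nD rho q M) => //.
  - exact: ltW.
  - move=> n; exact: nr_ge0.
  - exact: key.
split.
  rewrite /is_fixed_point.
  have -> : alpha + beta * z = z * (gamma - z).
    apply/eqP; rewrite -subr_eq0.
    have -> : alpha + beta * z - z * (gamma - z) = z ^+ 2 + (beta - gamma) * z + alpha by ring.
    by rewrite hF.
  by rewrite mulfK.
split.
  case=> er ei; rewrite ltcE /= => /andP[/eqP hei her]; subst ei.
  have [d [hd0 hde hdr]] : exists d, [/\ 0 < d, d < er & d <= rho].
    case: (lerP er rho) => h.
      by exists (er / 2%:R); split; rewrite ?divr_gt0 //; lra.
    by exists (rho / 2%:R); split; rewrite ?divr_gt0 //; lra.
  exists d%:C; first by rewrite ltcR.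
  move=> x hx hsum n.
  have hb := dec x hx d (ltW hd0) hdr (sumb x d hsum) n.
  have hqn : q ^+ (n %/ k.+1) <= 1 by apply: exprn_ile1 => //; exact: ltW.
  have : d * q ^+ (n %/ k.+1) <= d * 1 by rewrite ler_wpM2l // ltW.
  rewrite nrE ltcR mulr1; lra.
exists rho%:C; first by rewrite ltcR.
move=> x hx hsum [er ei]; rewrite ltcE /= => /andP[/eqP hei her]; subst ei.
have [j hj] := @geo_small R _ _ _ hq0 hq1 (ltW hrho) her.
exists (j * k.+1)%N => n hn.
have hb := dec x hx rho (ltW hrho) (lexx _) (sumb x rho hsum) n.
have hjn : (j <= n %/ k.+1)%N.
  by have := leq_div2r k.+1 hn; rewrite mulnK.
have : q ^+ (n %/ k.+1) <= q ^+ j by apply: ler_wiXn2l => //; exact: ltW.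
move=> hqq.
have : rho * q ^+ (n %/ k.+1) <= rho * q ^+ j by rewrite ler_wpM2l // ltW.
rewrite nrE ltcR; lra.
Qed.
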